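(* Let $\mathcal{S}_n\subseteq\mathcal{T}$ have $n$ elements, with empirical loss $L_n$, and let $\mathbf{w}_n^*$ be the minimizer of $R_n(\mathbf{w})=L_n(\mathbf{w})+\frac{cV_n}{2}\|\mathbf{w}\|^2$. Let $\mathbf{w}^*$ be a minimizer of the expected loss $L$. Then $$\mathbb{E}\left[\|\mathbf{w}_n^*\|^2\right]\le\frac4c+\|\mathbf{w}^*\|^2 .$$
   Context: Let $Z$ be a random variable with distribution $P$ on a space $\mathcal{Z}$ and $f:\mathbb{R}^p\times\mathcal{Z}\to\mathbb{R}$ a loss function; $L(\mathbf{w})=\mathbb{E}_Z[f(\mathbf{w},Z)]$. The training set $\mathcal{T}=\{z_1,\dots,z_N\}$ consists of $N$ independent samples from $P$; for a (fixed, data-independent) subset $\mathcal{S}_n$ with $n$ elements, $L_n(\mathbf{w})=\frac1n\sum_{z\in\mathcal{S}_n}f(\mathbf{w},z)$. Standing assumption: there are positive constants $V_k$ such that for every $k$ and every set $\mathcal{S}$ of $k$ independent samples from $P$, $\mathbb{E}[\sup_{\mathbf{w}}|L(\mathbf{w})-L_{\mathcal{S}}(\mathbf{w})|]\le V_k$ (expectation over the samples). $c>0$ is a constant. Assumption: for every $z$, $f(\cdot,z)$ is convex with $M$-Lipschitz continuous gradient. *)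

(* Defs.v *)
From HB Require Import structures.
From mathcomp Require Import all_boot all_order all_algebra.
From mathcomp Require Import all_classical all_reals all_analysis.
From mathcomp Require Import measurable_realfun.
Set Implicit Arguments. Unset Strict Implicit. Unset Printing Implicit Defensive.
Import Order.TTheory GRing.Theory Num.Theory.
Import numFieldNormedType.Exports.
Local Open Scope classical_set_scope.
Local Open Scope ring_scope.

Definition sqnorm (R : realType) (p : nat) (w : 'rV[R]_p) : R :=
  \sum_(i < p) (w ord0 i) ^+ 2.

Definition enorm (R : realType) (p : nat) (w : 'rV[R]_p) : R :=
  Num.sqrt (sqnorm w).

Definition convex_fun (R : realType) (p : nat) (g : 'rV[R]_p -> R) : Prop :=
  forall (a b : 'rV[R]_p) (t : R), 0 <= t <= 1 ->
    g (t *: a + (1 - t) *: b) <= t * g a + (1 - t) * g b.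

(* g is differentiable with M-Lipschitz gradient (Euclidean norm): the
   differential 'd g w (i.e. v |-> <grad g w, v>) is M-Lipschitz in w for the
   operator norm dual to the Euclidean norm, which is again Euclidean. *)
Definition lipschitz_gradient (R : realType) (p : nat) (M : R)
  (g : 'rV[R]_p -> R) : Prop :=
  (forall w, differentiable g w) /\
  forall (w1 w2 v : 'rV[R]_p),
    `|'d g w1 v - 'd g w2 v| <= M * enorm (w1 - w2) * enorm v.

Definition Lexp (R : realType) (dZ : measure_display) (Z : measurableType dZ)
  (P : probability Z R) (p : nat) (f : 'rV[R]_p -> Z -> R) (w : 'rV[R]_p) : R :=
  fine (\int[P]_x (f w x)%:E).

Definition Lemp (R : realType) (Omega Z : Type) (N p : nat)
  (f : 'rV[R]_p -> Z -> R) (z : 'I_N -> Omega -> Z) (S : {set 'I_N})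
  (omega : Omega) (w : 'rV[R]_p) : R :=
  (#|S|%:R)^-1 * \sum_(i in S) f w (z i omega).

Definition sup_dev (R : realType) (dZ : measure_display) (Z : measurableType dZ)
  (P : probability Z R) (Omega : Type) (N p : nat)
  (f : 'rV[R]_p -> Z -> R) (z : 'I_N -> Omega -> Z) (S : {set 'I_N})
  (omega : Omega) : \bar R :=
  ereal_sup [set (`|Lexp P f w - Lemp f z S omega w|)%:E | w in [set: 'rV[R]_p]].

Definition mutually_independent (R : realType) (d : measure_display)
  (Omega : measurableType d) (mu : probability Omega R)
  (dZ : measure_display) (Z : measurableType dZ) (N : nat)
  (z : 'I_N -> Omega -> Z) : Prop :=
  forall (J : {set 'I_N}) (A : 'I_N -> set Z),
    (forall i, measurable (A i)) ->
    mu (\bigcap_(i in [set i | i \in J]) (z i @^-1` A i)) =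
    (\prod_(i in J) mu (z i @^-1` A i))%E.

Definition distributed_as (R : realType) (d : measure_display)
  (Omega : measurableType d) (mu : probability Omega R)
  (dZ : measure_display) (Z : measurableType dZ) (P : probability Z R)
  (X : Omega -> Z) : Prop :=
  forall A : set Z, measurable A -> mu (X @^-1` A) = P A.

(* Main.v *)
Require Import Defs.
From HB Require Import structures.
From mathcomp Require Import all_boot all_order all_algebra.
From mathcomp Require Import all_classical all_reals all_analysis.
From mathcomp Require Import measurable_realfun.
Import Order.TTheory GRing.Theory Num.Theory.
Import numFieldNormedType.Exports.
Local Open Scope classical_set_scope.
Local Open Scope ring_scope.
From mathcomp Require Import ring lra.
Theorem lemma6 (R : realType)
  (d : measure_display) (Omega : measurableType d) (mu : probability Omega R)
  (dZ : measure_display) (Z : measurableType dZ) (P : probability Z R)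
  (p N : nat) (f : 'rV[R]_p -> Z -> R) (M c : R) (V : nat -> R)
  (z : 'I_N -> Omega -> Z) (Sn : {set 'I_N})
  (wn : Omega -> 'rV[R]_p) (wstar : 'rV[R]_p) :
  (* loss: measurable and integrable in z; convex, M-smooth in w *)
  (forall w, measurable_fun [set: Z] (f w)) ->
  (forall w, P.-integrable [set: Z] (fun x => (f w x)%:E)) ->
  (forall x, convex_fun (fun w => f w x)) ->
  (forall x, lipschitz_gradient M (fun w => f w x)) ->
  0 < c ->
  (forall k, 0 < V k) ->
  (* training set: N independent samples with distribution P *)
  (forall i, measurable_fun [set: Omega] (z i)) ->
  (forall i, distributed_as mu P (z i)) ->
  mutually_independent mu z ->
  (* standing assumption on every nonempty set S of k samples *)
  (forall S : {set 'I_N}, (0 < #|S|)%N ->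
     (\int[mu]_om sup_dev P f z S om <= (V #|S|)%:E)%E) ->
  (* the random variables whose expectations are taken are measurable *)
  measurable_fun [set: Omega] (fun om => sup_dev P f z Sn om : \bar R) ->
  measurable_fun [set: Omega] (fun om => sqnorm (wn om)) ->
  (* S_n : a fixed nonempty subset with n = #|S_n| elements *)
  (0 < #|Sn|)%N ->
  (* w_n^* minimizes R_n = L_n + c V_n / 2 ||w||^2 *)
  (forall om w,
     Lemp f z Sn om (wn om) + c * V #|Sn| / 2 * sqnorm (wn om)
     <= Lemp f z Sn om w + c * V #|Sn| / 2 * sqnorm w) ->
  (* w^* minimizes L *)
  (forall w, Lexp P f wstar <= Lexp P f w) ->
  (\int[mu]_om (sqnorm (wn om))%:E <= (4 / c + sqnorm wstar)%:E)%E.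
Proof.
move=> _ _ _ _ c0 V0 _ _ _ HV mS mW Sn0 Hmin Hstar.
set s := (fun om => sup_dev P f z Sn om).
set K := V #|Sn|.
have K0 : 0 < K by exact: V0.
set k := 4 / (c * K).
have cK : 0 < c * K by rewrite mulr_gt0.
have k0 : 0 < k by rewrite divr_gt0.
have sqn0 : forall w : 'rV[R]_p, 0 <= sqnorm w.
  by move=> w; rewrite /sqnorm; apply: sumr_ge0 => i _; exact: sqr_ge0.
have s_ub : forall om w, (`|Lexp P f w - Lemp f z Sn om w|%:E <= s om)%E.
  by move=> om w; apply: ereal_sup_ubound; exists w.
have s0 : forall om, (0 <= s om)%E.
  by move=> om; apply: le_trans (s_ub om 0); rewrite lee_fin.
have pw : forall om, ((sqnorm (wn om))%:E <= (sqnorm wstar)%:E + k%:E * s om)%E.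
  move=> om.
  have := s0 om; case E: (s om) => [r| |] // r0.
    have h1 := s_ub om wstar; have h2 := s_ub om (wn om).
    rewrite E lee_fin in h1; rewrite E lee_fin in h2.
    move: h1 h2; rewrite !ler_norml => /andP[h1 h1'] /andP[h2 h2'].
    have hm := Hmin om wstar. have hs := Hstar (wn om).
    rewrite -EFinM -EFinD lee_fin.
    rewrite /k -(ler_pM2l cK) mulrDr mulrA mulrCA divff ?gt_eqF // mulr1.
    rewrite -/K in hm.
    set A := Lemp f z Sn om wstar in hm h1 h1'.
    set B := Lemp f z Sn om (wn om) in hm h2 h2'.
    rewrite !(mulrAC (c * K) 2^-1 (sqnorm _)) in hm.
    set X := c * K * sqnorm (wn om) in hm *.
    set Y := c * K * sqnorm wstar in hm *.
    lra.
  rewrite gt0_muley ?lte_fin //.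
  by rewrite addey // leey.
have ms : measurable_fun [set: Omega] s by exact: mS.
apply: (@le_trans _ _ (\int[mu]_om ((sqnorm wstar)%:E + k%:E * s om))%E).
  apply: ge0_le_integral.
  - exact: measurableT.
  - by move=> om _; rewrite lee_fin.
  - by apply/measurable_EFinP.
  - apply: emeasurable_funD => //; exact: measurable_funeM.
  - by move=> om _; exact: pw.
rewrite ge0_integralD //; last 3 first.
- by move=> om _; rewrite lee_fin.
- by move=> om _; rewrite mule_ge0 // lee_fin ltW.
- exact: measurable_funeM.
have -> : (\int[mu]_(om in [set: Omega]) (sqnorm wstar)%:E = (sqnorm wstar)%:E)%E.
  rewrite (integral_cst mu measurableT); rewrite -[RHS]mule1; congr (_ * _)%E; exact: probability_setT.
rewrite ge0_integralZl //; last by rewrite lee_fin ltW.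
rewrite addrC EFinD; apply: leeD => //.
apply: (@le_trans _ _ (k%:E * (K%:E))%E).
  by rewrite lee_pmul2l ?lte_fin //; exact: HV.
rewrite -EFinM lee_fin le_eqVlt; apply/orP; left; apply/eqP; rewrite /k; field; rewrite ?gt_eqF // ?mulf_neq0 ?gt_eqF // ?mulr_gt0.
Qed.
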